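(* Consider the scheme described in the context, with $\mu_f,\mu_{g^*}\ge0$ valid strong convexity moduli of $f$ and $g^*$, and let $k\ge1$. Suppose $\tau_{k-1},\tau_k\in(0,1]$ satisfy $$\begin{cases}(L_{k-1}+\mu_f)(1-\tau_k)\tau_{k-1}^2+\mu_f(1-\tau_k)\tau_k\ \ge\ L_k\tau_k^2,\\ (L_{k-1}+\mu_f)(L_k+\mu_f)\tau_k\tau_{k-1}^2+(L_k+\mu_f)^2\tau_k^2\ \ge\ (L_{k-1}+\mu_f)L_k\tau_{k-1}^2.\end{cases}$$ Then for every $x\in\mathrm{dom} f$, $\mathcal{V}_{k+1}(x)\le(1-\tau_k)\mathcal{V}_k(x)$.
   Context: Setting: $f:\mathbb{R}^p\to\mathbb{R}\cup\{+\infty\}$, $g:\mathbb{R}^n\to\mathbb{R}\cup\{+\infty\}$ proper closed convex, $K\in\mathbb{R}^{n\times p}$ with $K\neq0$, $\|K\|$ its operator (spectral) norm; $g^*$ Fenchel conjugate of $g$; $\mathcal{L}(x,y):=f(x)+\langle Kx,y\rangle-g^*(y)$. $f$ is $\mu_f$-strongly convex means $f-\tfrac{\mu_f}{2}\|\cdot\|^2$ is convex ($\mu_f=0$ allowed); similarly for $g^*$ with $\mu_{g^*}$. $\mathrm{prox}_{\gamma h}(x):=\arg\min_z\{h(z)+\tfrac1{2\gamma}\|z-x\|^2\}$. For $\beta>0$: $g_\beta(u,\dot y):=\max_y\{\langle u,y\rangle-g^*(y)-\tfrac\beta2\|y-\dot y\|^2\}$ and $F_\beta(x,\dot y):=f(x)+g_\beta(Kx,\dot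 y)$. Scheme: given $x^0\in\mathrm{dom} f$, $\tilde y^0\in\mathrm{dom}\,g^*$, $\dot y\in\mathbb{R}^n$, $\beta_0>0$, and a sequence $\{\tau_k\}_{k\ge0}\subset(0,1]$, set $\hat x^0:=x^0$, $\beta_k:=\beta_{k-1}/(1+\tau_k)$ for $k\ge1$, $L_k:=\|K\|^2/(\beta_k+\mu_{g^*})$, $m_{k+1}:=(L_{k+1}+\mu_f)/(L_k+\mu_f)$, $\eta_{k+1}:=\frac{(1-\tau_k)\tau_k}{\tau_k^2+m_{k+1}\tau_{k+1}}$, and for $k\ge0$: $y^{k+1}:=\mathrm{prox}_{g^*/\beta_k}(\dot y+\tfrac1{\beta_k}K\hat x^k)$, $x^{k+1}:=\mathrm{prox}_{f/L_k}(\hat x^k-\tfrac1{L_k}K^\top y^{k+1})$, $\hat x^{k+1}:=x^{k+1}+\eta_{k+1}(x^{k+1}-x^k)$, $\tilde y^{k+1}:=(1-\tau_k)\tilde y^k+\tau_k y^{k+1}$. Lyapunov function, for $k\ge1$ and $x\in\mathrm{dom} f$: $\mathcal{V}_k(x):=F_{\beta_{k-1}}(x^k,\dot y)-\mathcal{L}(x,\tilde y^k)+\tfrac{(L_{k-1}+\mu_f)\tau_{k-1}^2}{2}\big\|\tfrac1{\tau_{k-1}}[x^k-(1-\tau_{k-1})x^{k-1}]-x\big\|^2$. *)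

(* Defs.v *)
From HB Require Import structures.
From mathcomp Require Import all_boot all_order all_algebra.
From mathcomp Require Import classical_sets boolp reals constructive_ereal ereal.
Set Implicit Arguments. Unset Strict Implicit. Unset Printing Implicit Defensive.
Import Order.TTheory GRing.Theory Num.Theory.
Local Open Scope ring_scope.
Local Open Scope classical_set_scope.

Section Defs.
Variable R : realType.

Definition dotp (d : nat) (u v : 'cV[R]_d) : R := \sum_(i < d) u i ord0 * v i ord0.
Definition nsq (d : nat) (u : 'cV[R]_d) : R := dotp u u.

Definition edom (d : nat) (h : 'cV[R]_d -> \bar R) : set 'cV[R]_d :=
  [set x | (h x < +oo)%E].

Definition properf (d : nat) (h : 'cV[R]_d -> \bar R) : Prop :=
  (exists x, (h x < +oo)%E) /\ (forall x, (-oo < h x)%E).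

Definition lscf (d : nat) (h : 'cV[R]_d -> \bar R) : Prop :=
  forall (x : 'cV[R]_d) (a : R), (a%:E < h x)%E ->
    exists e : R, 0 < e /\ forall z, nsq (z - x) < e -> (a%:E < h z)%E.

Definition convexf (d : nat) (h : 'cV[R]_d -> \bar R) : Prop :=
  forall (x z : 'cV[R]_d) (l : R), 0 < l < 1 ->
    (h (l *: x + (1 - l) *: z)%R <= l%:E * h x + (1 - l)%:E * h z)%E.

Definition strongly_convexf (d : nat) (mu : R) (h : 'cV[R]_d -> \bar R) : Prop :=
  convexf (fun x => (h x - (mu / 2 * nsq x)%:E)%E).

Definition fconj (d : nat) (g : 'cV[R]_d -> \bar R) (y : 'cV[R]_d) : \bar R :=
  ereal_sup (range (fun u : 'cV[R]_d => ((dotp u y)%:E - g u)%E)).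

Definition is_opnorm (n p : nat) (K : 'M[R]_(n, p)) (c : R) : Prop :=
  0 <= c /\ (forall x : 'cV[R]_p, nsq (K *m x) <= c ^+ 2 * nsq x) /\
  (forall c', 0 <= c' -> (forall x : 'cV[R]_p, nsq (K *m x) <= c' ^+ 2 * nsq x) -> c <= c').

Definition is_prox (d : nat) (h : 'cV[R]_d -> \bar R) (gam : R) (v z : 'cV[R]_d) : Prop :=
  forall w : 'cV[R]_d,
    (h z + ((2 * gam)^-1 * nsq (z - v))%:E <= h w + ((2 * gam)^-1 * nsq (w - v))%:E)%E.

Definition lagr (n p : nat) (f : 'cV[R]_p -> \bar R) (g : 'cV[R]_n -> \bar R)
  (K : 'M[R]_(n, p)) (x : 'cV[R]_p) (y : 'cV[R]_n) : \bar R :=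
  (f x + (dotp (K *m x) y)%:E - fconj g y)%E.

Definition gbeta (n : nat) (g : 'cV[R]_n -> \bar R) (b : R) (u yd : 'cV[R]_n) : \bar R :=
  ereal_sup (range (fun y : 'cV[R]_n =>
    ((dotp u y)%:E - fconj g y - (b / 2 * nsq (y - yd))%:E)%E)).

Definition Fbeta (n p : nat) (f : 'cV[R]_p -> \bar R) (g : 'cV[R]_n -> \bar R)
  (K : 'M[R]_(n, p)) (b : R) (x : 'cV[R]_p) (yd : 'cV[R]_n) : \bar R :=
  (f x + gbeta g b (K *m x) yd)%E.

Fixpoint betak (b0 : R) (tau : nat -> R) (k : nat) : R :=
  match k with
  | 0 => b0
  | k'.+1 => betak b0 tau k' / (1 + tau k'.+1)
  end.

Definition Lk (nK mug b0 : R) (tau : nat -> R) (k : nat) : R :=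
  nK ^+ 2 / (betak b0 tau k + mug).

Definition m_next (nK muf mug b0 : R) (tau : nat -> R) (k : nat) : R :=
  (Lk nK mug b0 tau k.+1 + muf) / (Lk nK mug b0 tau k + muf).

Definition eta_next (nK muf mug b0 : R) (tau : nat -> R) (k : nat) : R :=
  (1 - tau k) * tau k / (tau k ^+ 2 + m_next nK muf mug b0 tau k * tau k.+1).

(* Lyapunov function V_k(x), meaningful for k >= 1. *)
Definition Vly (n p : nat) (f : 'cV[R]_p -> \bar R) (g : 'cV[R]_n -> \bar R)
  (K : 'M[R]_(n, p)) (nK muf mug b0 : R) (tau : nat -> R) (yd : 'cV[R]_n)
  (x : nat -> 'cV[R]_p) (yt : nat -> 'cV[R]_n) (k : nat) (xx : 'cV[R]_p) : \bar R :=
  (Fbeta f g K (betak b0 tau k.-1) (x k) yd - lagr f g K xx (yt k)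
   + ((Lk nK mug b0 tau k.-1 + muf) * tau k.-1 ^+ 2 / 2 *
      nsq ((tau k.-1)^-1 *: (x k - (1 - tau k.-1) *: x k.-1) - xx))%:E)%E.

End Defs.

(* Main.v *)
Require Import Defs.
From HB Require Import structures.
From mathcomp Require Import all_boot all_order all_algebra.
From mathcomp Require Import classical_sets boolp reals constructive_ereal ereal.
From mathcomp Require Import ring lra.
Import Order.TTheory GRing.Theory Num.Theory.
Set Implicit Arguments. Unset Strict Implicit. Unset Printing Implicit Defensive.
Local Open Scope ring_scope.
Section Dot.
Variable R : realType.
Variable d : nat.
Implicit Types u v w : 'cV[R]_d.

Lemma dotpC u v : dotp u v = dotp v u.
Proof. by rewrite /dotp; apply: eq_bigr => i _; rewrite mulrC. Qed.

Lemma dotpDl u v w : dotp (u + v) w = dotp u w + dotp v w.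
Proof. by rewrite /dotp -big_split; apply: eq_bigr => i _; rewrite !mxE mulrDl. Qed.

Lemma dotpZl a u v : dotp (a *: u) v = a * dotp u v.
Proof. by rewrite /dotp mulr_sumr; apply: eq_bigr => i _; rewrite !mxE mulrA. Qed.

Lemma dotpNl u v : dotp (- u) v = - dotp u v.
Proof. by rewrite -scaleN1r dotpZl mulN1r. Qed.

Lemma dotpBl u v w : dotp (u - v) w = dotp u w - dotp v w.
Proof. by rewrite dotpDl dotpNl. Qed.

Lemma dotpDr u v w : dotp w (u + v) = dotp w u + dotp w v.
Proof. by rewrite dotpC dotpDl !(dotpC w). Qed.
Lemma dotpZr a u v : dotp v (a *: u) = a * dotp v u.
Proof. by rewrite dotpC dotpZl dotpC. Qed.
Lemma dotpNr u v : dotp v (- u) = - dotp v u.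
Proof. by rewrite dotpC dotpNl dotpC. Qed.
Lemma dotpBr u v w : dotp w (u - v) = dotp w u - dotp w v.
Proof. by rewrite dotpDr dotpNr. Qed.

Lemma nsq_ge0 u : 0 <= nsq u.
Proof. by rewrite /nsq /dotp; apply: sumr_ge0 => i _; rewrite -expr2 sqr_ge0. Qed.

End Dot.

Lemma dotp_mul (R : realType) n p (K : 'M[R]_(n,p)) x yv :
  dotp (K *m x) yv = dotp x (K^T *m yv).
Proof.
have E : forall d (u v : 'cV[R]_d), dotp u v = (u^T *m v) ord0 ord0.
  by move=> d u v; rewrite /dotp !mxE; apply: eq_bigr => i _; rewrite !mxE.
by rewrite !E trmx_mul mulmxA.
Qed.

Ltac dexp := rewrite /nsq ?(dotpDl, dotpDr, dotpZl, dotpZr, dotpNl, dotpNr, dotpBl, dotpBr).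

Section Conv.
Variable R : realType.
Variable d : nat.
Implicit Types u v w z : 'cV[R]_d.

Lemma nsq_comb l w z : nsq (l *: w + (1 - l) *: z) =
  l * nsq w + (1 - l) * nsq z - l * (1 - l) * nsq (w - z).
Proof. dexp; rewrite (dotpC z w); ring. Qed.

Lemma sc_real (h : 'cV[R]_d -> \bar R) mu w z l hw hz :
  strongly_convexf mu h -> 0 < l <= 1 -> h w = hw%:E -> h z = hz%:E ->
  (h (l *: w + (1 - l) *: z)%R <=
     (l * hw + (1 - l) * hz - mu / 2 * (l * (1 - l)) * nsq (w - z))%:E)%E.
Proof.
move=> Hsc /andP[l0 l1] Hw Hz.
have [->|lne1] := eqVneq l 1.
  rewrite subrr scale0r addr0 scale1r Hw lee_fin; lra.
have l1' : l < 1 by rewrite lt_neqAle lne1 l1.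
have := Hsc w z l; rewrite l0 l1' => /(_ isT).
rewrite Hw Hz -!EFinB -!EFinM -EFinD.
case: (h _) => [r| |] //=; rewrite ?lee_fin.
  rewrite nsq_comb => H; lra.
by move=> _; rewrite leNye.
Qed.

Lemma sc_real0 (h : 'cV[R]_d -> \bar R) mu w z l hw hz :
  0 <= mu -> strongly_convexf mu h -> 0 < l <= 1 -> h w = hw%:E -> h z = hz%:E ->
  (h (l *: w + (1 - l) *: z)%R <= (l * hw + (1 - l) * hz)%:E)%E.
Proof.
move=> mu0 Hsc Hl Hw Hz; apply: le_trans (sc_real Hsc Hl Hw Hz) _.
rewrite lee_fin; case/andP: Hl => l0 l1.
have : 0 <= mu / 2 * (l * (1 - l)) * nsq (w - z).
  by rewrite !mulr_ge0 ?nsq_ge0 ?invr_ge0 ?subr_ge0 // ltW.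
lra.
Qed.

End Conv.

Section Prox.
Variable R : realType.
Variable d : nat.
Implicit Types u v w z : 'cV[R]_d.

Lemma prox_nomi (h : 'cV[R]_d -> \bar R) gam v z hz :
  is_prox h gam v z -> h z = hz%:E -> forall w, (-oo < h w)%E.
Proof.
move=> Hp Hz w; have := Hp w; rewrite Hz.
by case: (h w) => [r| |] //= _; exact: ltNyr.
Qed.

Lemma prox_ineq (h : 'cV[R]_d -> \bar R) mu gam v z w hz hw :
  0 <= mu -> 0 <= gam -> strongly_convexf mu h -> is_prox h gam v z ->
  h z = hz%:E -> h w = hw%:E ->
  hz + 2 * (2 * gam)^-1 * dotp (v - z) (w - z) + mu / 2 * nsq (w - z) <= hw.
Proof.
move=> mu0 gam0 Hsc Hp Hz Hw.
set c := (2 * gam)^-1.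
have c0 : 0 <= c by rewrite /c invr_ge0 mulr_ge0.
set N := nsq (w - z).
have N0 : 0 <= N := nsq_ge0 _.
set X := hz + 2 * c * dotp (v - z) (w - z) + mu / 2 * N - hw.
suff : X <= 0 by rewrite /X; lra.
rewrite leNgt; apply/negP => X0.
set C := mu / 2 * N + c * N.
have C0 : 0 <= C by rewrite /C addr_ge0 // mulr_ge0 // mulr_ge0 // invr_ge0.
set l := X / (2 * (C + X)).
have CX0 : 0 < 2 * (C + X) by lra.
have lE : l * (2 * (C + X)) = X by rewrite /l mulfVK // gt_eqF.
have l0 : 0 < l by rewrite /l divr_gt0.
have l1 : l <= 1.
  rewrite /l ler_pdivrMr //; lra.
have Hsc' := sc_real Hsc (introT andP (conj l0 l1)) Hw Hz.
have := Hp (l *: w + (1 - l) *: z).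
rewrite -/c Hz.
have Ev : l *: w + (1 - l) *: z - v = (z - v) + l *: (w - z).
  by apply/matrixP => i j; rewrite !mxE; ring.
rewrite Ev.
have EN : nsq ((z - v) + l *: (w - z)) =
  nsq (z - v) + 2 * l * dotp (z - v) (w - z) + l ^+ 2 * N.
  by rewrite /N; move: (z - v) (w - z) => a b; dexp; rewrite (dotpC b a); ring.
rewrite EN.
have ED : dotp (v - z) (w - z) = - dotp (z - v) (w - z).
  by rewrite -dotpNl opprB.
move: Hsc'; case: (h _) => [r| |] //=; rewrite ?lee_fin => Hr.
move=> Hq.
have H1 : l * X <= l ^+ 2 * C.
  move: X0 Hr Hq; rewrite /X /C ED -/N; clearbody l c N; move=> X0 Hr Hq.
  have E : l * (hz + 2 * c * - dotp (z - v) (w - z) + mu / 2 * N - hw) - l ^+ 2 * (mu / 2 * N + c * N) =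
    (l * hz - l * hw + mu / 2 * (l * (1 - l)) * N - 2 * c * l * dotp (z - v) (w - z) - c * l ^+ 2 * N) by ring.
  lra.
have H2 : X <= l * C.
  by move: H1; rewrite expr2 -mulrA ler_pM2l.
nra.
Qed.

End Prox.

Section Gbeta.
Variable R : realType.
Variable n : nat.
Implicit Types u v w z : 'cV[R]_n.

Lemma gbeta_lb (g : 'cV[R]_n -> \bar R) b u yd y0 :
  ((dotp u y0)%:E - fconj g y0 - (b / 2 * nsq (y0 - yd))%:E <= gbeta g b u yd)%E.
Proof. by apply: ereal_sup_ubound; exists y0. Qed.

Lemma inv2inv (b : R) : 2 * (2 * b^-1)^-1 = b.
Proof. by rewrite invfM invrK mulrA mulfV ?mul1r // pnatr_eq0. Qed.

Lemma young (s : R) w z : 0 < s -> dotp w z - s / 2 * nsq z <= (2 * s)^-1 * nsq w.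
Proof.
move=> s0.
have H := nsq_ge0 (w - s *: z).
have E : nsq (w - s *: z) = nsq w - 2 * s * dotp w z + s ^+ 2 * nsq z.
  by dexp; rewrite (dotpC z w); ring.
rewrite E in H.
have E2 : (2 * s)^-1 * nsq w - (dotp w z - s / 2 * nsq z) =
   (2 * s)^-1 * (nsq w - 2 * s * dotp w z + s ^+ 2 * nsq z).
  by field; rewrite gt_eqF.
have : 0 <= (2 * s)^-1 * (nsq w - 2 * s * dotp w z + s ^+ 2 * nsq z).
  by rewrite mulr_ge0 // invr_ge0 mulr_ge0 // ltW.
lra.
Qed.

Lemma gbeta_up (g : 'cV[R]_n -> \bar R) mug b u u' yd y0 gy :
  0 < b -> 0 <= mug -> strongly_convexf mug (fconj g) ->
  is_prox (fconj g) b^-1 (yd + b^-1 *: u) y0 -> fconj g y0 = gy%:E ->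
  (gbeta g b u' yd <= (dotp u y0 - gy - b / 2 * nsq (y0 - yd)
      + dotp (u' - u) y0 + (2 * (b + mug))^-1 * nsq (u' - u))%:E)%E.
Proof.
move=> b0 mug0 Hsc Hp Hy.
apply: ge_ereal_sup => _ [y' _ <-].
have Hni := prox_nomi Hp Hy y'.
case E: (fconj g y') Hni => [r| |] //= _; last by rewrite leNye.
have bi0 : 0 <= b^-1 by rewrite invr_ge0 ltW.
have Hpi := prox_ineq mug0 bi0 Hsc Hp Hy E.
rewrite inv2inv in Hpi.
rewrite -!EFinB lee_fin.
have sp : 0 < b + mug by lra.
have young' := young (u' - u) (y' - y0) sp.
move: Hpi young'.
have [dl ->] : exists dl, y' = y0 + dl by exists (y' - y0); rewrite addrC subrK.
have [w ->] : exists w, u' = u + w by exists (u' - u); rewrite addrC subrK.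
have -> : u + w - u = w by rewrite addrC addKr.
have -> : y0 + dl - y0 = dl by rewrite addrC addKr.
move=> Hpi young'.
have E1 : dotp (yd + b^-1 *: u - y0) dl = dotp yd dl + b^-1 * dotp u dl - dotp y0 dl.
  by dexp.
have E2 : nsq (y0 + dl - yd) = nsq (y0 - yd) + 2 * dotp dl y0 - 2 * dotp dl yd + nsq dl.
  by dexp; rewrite (dotpC y0 dl) (dotpC yd dl) (dotpC y0 yd); ring.
have E3 : dotp (u + w) (y0 + dl) = dotp u y0 + dotp w y0 + dotp u dl + dotp w dl.
  by dexp; ring.
have E4 : b * (b^-1 * dotp u dl) = dotp u dl by rewrite mulrA mulfV ?mul1r // gt_eqF.
rewrite E1 in Hpi; rewrite E2 E3.
rewrite (dotpC dl y0) (dotpC dl yd).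
have : 0 <= mug / 2 * nsq dl by rewrite mulr_ge0 ?nsq_ge0 // divr_ge0.
nra.
Qed.

End Gbeta.

Section Quad.
Variable R : realType.
Variable d : nat.
Implicit Types u v w z e : 'cV[R]_d.

Lemma psd (a b c : R) e u : 0 <= a -> 0 <= c -> b ^+ 2 <= a * c ->
  0 <= a * nsq e + 2 * b * dotp e u + c * nsq u.
Proof.
move=> a0 c0 H.
have [a00|apos] := eqVneq a 0.
  rewrite a00 mul0r in H.
  have b0 : b = 0 by apply/eqP; rewrite -sqrf_eq0 eq_le H sqr_ge0.
  by rewrite a00 b0 !(mul0r, mulr0, add0r) mulr_ge0 // nsq_ge0.
have ap : 0 < a by rewrite lt_neqAle eq_sym apos a0.
have E : nsq (a *: e + b *: u) = a ^+ 2 * nsq e + 2 * a * b * dotp e u + b ^+ 2 * nsq u.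
  by dexp; rewrite (dotpC u e); ring.
have H1 := nsq_ge0 (a *: e + b *: u); rewrite E in H1.
have H2 : 0 <= (a * c - b ^+ 2) * nsq u by rewrite mulr_ge0 ?nsq_ge0 // subr_ge0.
have : 0 <= a * (a * nsq e + 2 * b * dotp e u + c * nsq u).
  have -> : a * (a * nsq e + 2 * b * dotp e u + c * nsq u) =
    (a ^+ 2 * nsq e + 2 * a * b * dotp e u + b ^+ 2 * nsq u) + (a * c - b ^+ 2) * nsq u by ring.
  by rewrite addr_ge0.
by rewrite pmulr_rge0.
Qed.

Lemma quad_scalar (L A mu t t' : R) :
  0 < t <= 1 -> 0 < t' <= 1 -> 0 <= mu -> 0 < L -> 0 < A ->
  A * (1 - t) * t' ^+ 2 + mu * (1 - t) * t >= L * t ^+ 2 ->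
  A * (L + mu) * t * t' ^+ 2 + (L + mu) ^+ 2 * t ^+ 2 >= A * L * t' ^+ 2 ->
  let D := t' ^+ 2 + (L + mu) / A * t in let al := t * D - t' ^+ 2 in
  [/\ 0 <= mu * t * (1 - t) * D ^+ 2 - L * al ^+ 2,
      0 <= (1 - t) * A * t' ^+ 2 * D ^+ 2 - L * t' ^+ 4 &
      (- (L * al * t' ^+ 2)) ^+ 2 <= (mu * t * (1 - t) * D ^+ 2 - L * al ^+ 2) *
                          ((1 - t) * A * t' ^+ 2 * D ^+ 2 - L * t' ^+ 4)].
Proof.
move=> /andP[t0 t1] /andP[tp0 tp1] mu0 L0 A0 C1 C2 D al.
have An : A != 0 by rewrite gt_eqF.
set K1 := mu * t * (1 - t) * A * D ^+ 2 - mu * t * L * t' ^+ 2 - L * A * al ^+ 2.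
have EK : K1 = (mu * t - A * al) * ((L + mu) * al + mu * t' ^+ 2).
  by rewrite /K1 /al /D; field.
have F1 : 0 <= mu * t - A * al.
  have -> : mu * t - A * al = A * (1 - t) * t' ^+ 2 + mu * (1 - t) * t - L * t ^+ 2.
    by rewrite /al /D; field.
  lra.
have F2 : 0 <= (L + mu) * al + mu * t' ^+ 2.
  have -> : (L + mu) * al + mu * t' ^+ 2 =
     (A * (L + mu) * t * t' ^+ 2 + (L + mu) ^+ 2 * t ^+ 2 - A * L * t' ^+ 2) / A.
    by rewrite /al /D; field.
  by rewrite divr_ge0 ?subr_ge0 // ltW.
have K0 : 0 <= K1 by rewrite EK mulr_ge0.
have Ea : (mu * t * (1 - t) * D ^+ 2 - L * al ^+ 2) * A = K1 + mu * t * L * t' ^+ 2.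
  by rewrite /K1; ring.
have Ha : 0 <= mu * t * (1 - t) * D ^+ 2 - L * al ^+ 2.
  have : 0 <= K1 + mu * t * L * t' ^+ 2.
    by rewrite addr_ge0 // !mulr_ge0 // ?ltW // sqr_ge0.
  by rewrite -Ea pmulr_lge0.
have Edet : (mu * t * (1 - t) * D ^+ 2 - L * al ^+ 2) *
            ((1 - t) * A * t' ^+ 2 * D ^+ 2 - L * t' ^+ 4) - (- (L * al * t' ^+ 2)) ^+ 2
            = t' ^+ 2 * (1 - t) * D ^+ 2 * K1.
  by rewrite /K1; ring.
have Hdet : 0 <= t' ^+ 2 * (1 - t) * D ^+ 2 * K1.
  apply: mulr_ge0 => //; apply: mulr_ge0; last exact: sqr_ge0.
  by apply: mulr_ge0; [exact: sqr_ge0 | rewrite subr_ge0].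
have Ec : mu * t * ((1 - t) * A * t' ^+ 2 * D ^+ 2 - L * t' ^+ 4) =
          t' ^+ 2 * (K1 + L * A * al ^+ 2).
  by rewrite /K1 /al /D; field.
have Hc : 0 <= (1 - t) * A * t' ^+ 2 * D ^+ 2 - L * t' ^+ 4.
  have [mu00|mupos] := eqVneq mu 0.
    have al0 : al = 0.
      have EK2 : K1 = - (A * L) * al ^+ 2 by rewrite EK mu00; ring.
      have h : (A * L) * al ^+ 2 <= 0 by move: K0; rewrite EK2; lra.
      have h2 : al ^+ 2 <= 0 by rewrite -(pmulr_rle0 _ (mulr_gt0 A0 L0)).
      by apply/eqP; rewrite -sqrf_eq0 eq_le h2 sqr_ge0.
    have -> : (1 - t) * A * t' ^+ 2 * D ^+ 2 - L * t' ^+ 4 =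
              t' ^+ 2 * D * (L + mu) * t - L * t' ^+ 4 - A * t' ^+ 2 * D * al.
      by rewrite /al /D; field.
    have tD : t * D = t' ^+ 2 by move: al0; rewrite /al => /eqP; rewrite subr_eq0 => /eqP.
    rewrite al0 mu00 !(mulr0, addr0, subr0).
    have -> : t' ^+ 2 * D * L * t = L * t' ^+ 2 * (t * D) by ring.
    rewrite tD; lra.
  have mup : 0 < mu by rewrite lt_neqAle eq_sym mupos mu0.
  have : 0 <= mu * t * ((1 - t) * A * t' ^+ 2 * D ^+ 2 - L * t' ^+ 4).
    rewrite Ec; apply: mulr_ge0; first exact: sqr_ge0.
    apply: addr_ge0 => //; apply: mulr_ge0; last exact: sqr_ge0.
    by apply: mulr_ge0; apply: ltW.
  by rewrite pmulr_rge0 ?mulr_gt0.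
split => //; lra.
Qed.

End Quad.

Lemma quad_vec (R : realType) d (L A mu t t' : R) (e u : 'cV[R]_d) :
  0 < t <= 1 -> 0 < t' <= 1 -> 0 <= mu -> 0 <= L -> 0 <= A -> (0 < L -> 0 < A) ->
  A * (1 - t) * t' ^+ 2 + mu * (1 - t) * t >= L * t ^+ 2 ->
  A * (L + mu) * t * t' ^+ 2 + (L + mu) ^+ 2 * t ^+ 2 >= A * L * t' ^+ 2 ->
  L * nsq ((t - t' ^+ 2 / (t' ^+ 2 + (L + mu) / A * t)) *: e
           + (t' ^+ 2 / (t' ^+ 2 + (L + mu) / A * t)) *: u)
   <= mu * t * (1 - t) * nsq e + (1 - t) * A * t' ^+ 2 * nsq u.
Proof.
move=> Ht Htp mu0 L0 A0 LA C1 C2.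
have Hr : 0 <= mu * t * (1 - t) * nsq e + (1 - t) * A * t' ^+ 2 * nsq u.
  case/andP: Ht => t0 t1; case/andP: Htp => tp0 tp1.
  apply: addr_ge0; apply: mulr_ge0; try exact: nsq_ge0.
    by apply: mulr_ge0; [apply: mulr_ge0 => //; apply: ltW|rewrite subr_ge0].
  by apply: mulr_ge0; [apply: mulr_ge0 => //; rewrite subr_ge0 | exact: sqr_ge0].
have [->|Ln] := eqVneq L 0; first by rewrite mul0r.
have Lp : 0 < L by rewrite lt_neqAle eq_sym Ln.
have Ap := LA Lp.
have [Ha Hc Hb] := quad_scalar Ht Htp mu0 Lp Ap C1 C2.
move: Ha Hc Hb.
set D := t' ^+ 2 + (L + mu) / A * t.
set al := t * D - t' ^+ 2.
move=> Ha Hc Hb.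
have Dp : 0 < D.
  case/andP: Ht => t0 _; case/andP: Htp => tp0 _.
  have h1 : 0 < t' ^+ 2 by rewrite exprn_gt0.
  have h2 : 0 <= (L + mu) / A * t.
    by apply: mulr_ge0; [apply: divr_ge0; [lra | exact: ltW] | exact: ltW].
  rewrite /D; lra.
have Dn : D != 0 by rewrite gt_eqF.
have := psd e u Ha Hc Hb.
have EN : nsq ((t - t' ^+ 2 / D) *: e + (t' ^+ 2 / D) *: u) =
   (t - t' ^+ 2 / D) ^+ 2 * nsq e + 2 * (t - t' ^+ 2 / D) * (t' ^+ 2 / D) * dotp e u
   + (t' ^+ 2 / D) ^+ 2 * nsq u.
  by dexp; rewrite (dotpC u e); ring.
rewrite EN.
move: (nsq e) (nsq u) (dotp e u) => E F G H.
have D2 : 0 < D ^+ 2 by rewrite exprn_gt0.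
rewrite -subr_ge0 -(pmulr_rge0 _ D2).
have -> : D ^+ 2 * (mu * t * (1 - t) * E + (1 - t) * A * t' ^+ 2 * F -
    L * ((t - t' ^+ 2 / D) ^+ 2 * E + 2 * (t - t' ^+ 2 / D) * (t' ^+ 2 / D) * G +
     (t' ^+ 2 / D) ^+ 2 * F)) =
   (mu * t * (1 - t) * D ^+ 2 - L * al ^+ 2) * E + 2 * - (L * al * t' ^+ 2) * G +
   ((1 - t) * A * t' ^+ 2 * D ^+ 2 - L * t' ^+ 4) * F.
  by rewrite /al; field.
exact: H.
Qed.

Lemma fconj_gtNy (R : realType) n (g : 'cV[R]_n -> \bar R) :
  properf g -> forall yv, (-oo < fconj g yv)%E.
Proof.
case=> [[u0 Hu] Hm] yv; have := Hm u0.
case E: (g u0) Hu => [r| |] // _ _.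
apply: (lt_le_trans (ltNyr (dotp u0 yv - r))).
by apply: ereal_sup_ubound; exists u0 => //; rewrite E EFinB.
Qed.

Lemma prox_fin (R : realType) d (h : 'cV[R]_d -> \bar R) gam v z :
  (exists x0, (h x0 < +oo)%E) -> (forall x, (-oo < h x)%E) -> is_prox h gam v z ->
  exists r, h z = r%:E.
Proof.
move=> [x0 H0] Hm Hp; have := Hp x0; have := Hm z.
case E0: (h x0) H0 => [r0| |] // _; case: (h z) => [r| |] // _; by exists r.
Qed.

Lemma nsq_le0 (R : realType) d (u v : 'cV[R]_d) : nsq u <= 0 -> dotp u v = 0.
Proof.
move=> H.
have H0 : nsq u = 0 by apply/eqP; rewrite eq_le H nsq_ge0.
have Hi : forall i, u i ord0 = 0.
  move=> i; move/eqP: H0; rewrite /nsq /dotp psumr_eq0 => [/allP Hall|j _].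
    by have := Hall i (mem_index_enum i); rewrite /= mulf_eq0 orbb => /eqP.
  by rewrite -expr2 sqr_ge0.
by rewrite /dotp big1 // => i _; rewrite Hi mul0r.
Qed.

Lemma betak_gt0 (R : realType) (b0 : R) tau :
  0 < b0 -> (forall j, 0 < tau j <= 1) -> forall j, 0 < betak b0 tau j.
Proof.
move=> b00 Ht; elim=> [|j IH] //=.
have := Ht j.+1 => /andP[h _].
by rewrite divr_gt0 // addr_gt0.
Qed.

Lemma fin_of (R : realType) (E : \bar R) r : (-oo < E)%E -> (E <= r%:E)%E -> exists s, E = s%:E.
Proof. by case: E => [s| |] //; exists s. Qed.

Lemma yt_fin (R : realType) n (g : 'cV[R]_n -> \bar R) mug (tau : nat -> R) b0 yd
   (xh : nat -> 'cV[R]_n) (y yt : nat -> 'cV[R]_n) :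
  properf g -> 0 <= mug -> strongly_convexf mug (fconj g) ->
  (forall j, 0 < tau j <= 1) -> (fconj g (yt 0%N) < +oo)%E ->
  (forall j, is_prox (fconj g) (betak b0 tau j)^-1 (yd + (betak b0 tau j)^-1 *: xh j) (y j.+1)) ->
  (forall j, yt j.+1 = (1 - tau j) *: yt j + tau j *: y j.+1) ->
  forall j, exists r, fconj g (yt j) = r%:E.
Proof.
move=> Hpg mug0 Hsc Ht H0 Hpr Hyt.
have Hlow := fconj_gtNy Hpg.
have Hex : exists x0, (fconj g x0 < +oo)%E by exists (yt 0%N).
elim=> [|j [r Hr]].
  by case E: (fconj g (yt 0%N)) H0 (Hlow (yt 0%N)) => [r| |] // _ _; exists r.
have [s Hs] := prox_fin Hex Hlow (Hpr j).
have := sc_real0 mug0 Hsc (Ht j) Hs Hr.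
have E : tau j *: y j.+1 + (1 - tau j) *: yt j = yt j.+1 by rewrite Hyt addrC.
rewrite E => H.
exact: fin_of (Hlow _) H.
Qed.

Theorem lemma3 (R : realType) (p n : nat)
  (f : 'cV[R]_p -> \bar R) (g : 'cV[R]_n -> \bar R) (K : 'M[R]_(n, p))
  (nK muf mug b0 : R) (tau : nat -> R) (yd : 'cV[R]_n)
  (x xh : nat -> 'cV[R]_p) (y yt : nat -> 'cV[R]_n) (k : nat) :
  properf f -> lscf f -> convexf f ->
  properf g -> lscf g -> convexf g ->
  K != 0 -> is_opnorm K nK ->
  0 <= muf -> 0 <= mug ->
  strongly_convexf muf f -> strongly_convexf mug (fconj g) ->
  0 < b0 -> (forall j, 0 < tau j <= 1) ->
  (f (x 0%N) < +oo)%E -> (fconj g (yt 0%N) < +oo)%E ->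
  xh 0%N = x 0%N ->
  (forall j, is_prox (fconj g) (betak b0 tau j)^-1
               (yd + (betak b0 tau j)^-1 *: (K *m xh j)) (y j.+1)) ->
  (forall j, is_prox f (Lk nK mug b0 tau j)^-1
               (xh j - (Lk nK mug b0 tau j)^-1 *: (K^T *m y j.+1)) (x j.+1)) ->
  (forall j, xh j.+1 = x j.+1 + eta_next nK muf mug b0 tau j *: (x j.+1 - x j)) ->
  (forall j, yt j.+1 = (1 - tau j) *: yt j + tau j *: y j.+1) ->
  (1 <= k)%N ->
  (Lk nK mug b0 tau k.-1 + muf) * (1 - tau k) * tau k.-1 ^+ 2
    + muf * (1 - tau k) * tau k >= Lk nK mug b0 tau k * tau k ^+ 2 ->
  (Lk nK mug b0 tau k.-1 + muf) * (Lk nK mug b0 tau k + muf) * tau k * tau k.-1 ^+ 2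
    + (Lk nK mug b0 tau k + muf) ^+ 2 * tau k ^+ 2
    >= (Lk nK mug b0 tau k.-1 + muf) * Lk nK mug b0 tau k * tau k.-1 ^+ 2 ->
  forall xx : 'cV[R]_p, (f xx < +oo)%E ->
    (Vly f g K nK muf mug b0 tau yd x yt k.+1 xx
       <= (1 - tau k)%R%:E * Vly f g K nK muf mug b0 tau yd x yt k xx)%E.
Proof.
move=> Hpf _ _ Hpg _ _ _ Hop muf0 mug0 Hscf Hscg b00 Ht _ Hgy0 _ Hprg Hprf Hxh Hyt Hk C1 C2 xx Hxx.
case: k Hk C1 C2 => [//|k'] _ C1 C2.
have Bpos := betak_gt0 b00 Ht.
have [t0 t1] : 0 < tau k'.+1 /\ tau k'.+1 <= 1 by case/andP: (Ht k'.+1).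
have [tp0 tp1] : 0 < tau k' /\ tau k' <= 1 by case/andP: (Ht k').
have Bk : betak b0 tau k'.+1 = betak b0 tau k' / (1 + tau k'.+1) by [].
have [nK0 _] := Hop.
have Lge0 : forall j, 0 <= Lk nK mug b0 tau j.
  by move=> j; rewrite /Lk divr_ge0 ?sqr_ge0 // addr_ge0 // ltW.
have [Hfex Hflow] := Hpf.
have Hglow := fconj_gtNy Hpg.
have Hgex : exists x0, (fconj g x0 < +oo)%E by exists (yt 0%N).
have [fk Efk] := prox_fin Hfex Hflow (Hprf k').
have [fk1 Efk1] := prox_fin Hfex Hflow (Hprf k'.+1).
have [fx Efx] : exists r, f xx = r%:E.
  by case E: (f xx) Hxx (Hflow xx) => [r| |] // _ _; exists r.
have [gy Egy] := prox_fin Hgex Hglow (Hprg k'.+1).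
have [gyk Egyk] := prox_fin Hgex Hglow (Hprg k').
have Hytf := yt_fin Hpg mug0 Hscg Ht Hgy0 Hprg Hyt.
have [gtk Egtk] := Hytf k'.+1.
have [gtk1 Egtk1] := Hytf k'.+2.
have Gkup := gbeta_up (K *m x k'.+1) (Bpos k') mug0 Hscg (Hprg k') Egyk.
have Gklb := gbeta_lb g (betak b0 tau k') (K *m x k'.+1) yd (y k'.+2).
rewrite Egy -!EFinB in Gklb.
have [Gk EGk] := fin_of (lt_le_trans (ltNyr _) Gklb) Gkup.
rewrite EGk lee_fin in Gklb.
have Gk1up := gbeta_up (K *m x k'.+2) (Bpos k'.+1) mug0 Hscg (Hprg k'.+1) Egy.
have Gk1lb := gbeta_lb g (betak b0 tau k'.+1) (K *m x k'.+2) yd (y k'.+2).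
rewrite Egy -!EFinB in Gk1lb.
have [Gk1 EGk1] := fin_of (lt_le_trans (ltNyr _) Gk1lb) Gk1up.
rewrite EGk1 lee_fin in Gk1up.
have Hscf1 := sc_real Hscf (Ht k'.+1) Efx Efk.
set w := tau k'.+1 *: xx + (1 - tau k'.+1) *: x k'.+1 in Hscf1 *.
have [fw Efw] := fin_of (Hflow _) Hscf1.
rewrite Efw lee_fin in Hscf1.
set L := Lk nK mug b0 tau k'.+1 in C1 C2 *.
set L' := Lk nK mug b0 tau k' in C1 C2 *.
have L0 : 0 <= L := Lge0 _.
have L'0 : 0 <= L' := Lge0 _.
have Li0 : 0 <= L^-1 by rewrite invr_ge0.
have Hb := prox_ineq muf0 Li0 Hscf (Hprf k'.+1) Efk1 Efw.
rewrite inv2inv in Hb.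
have He := sc_real0 mug0 Hscg (Ht k'.+1) Egy Egtk.
have Eyt : tau k'.+1 *: y k'.+2 + (1 - tau k'.+1) *: yt k'.+1 = yt k'.+2 by rewrite (Hyt k'.+1) addrC.
rewrite Eyt Egtk1 lee_fin in He.
have [_ [Hopn _]] := Hop.
have BmP : forall j, 0 < betak b0 tau j + mug by move=> j; have := Bpos j; lra.
have LnK : 0 < L -> 0 < nK ^+ 2.
  move=> Lp; rewrite lt_neqAle sqr_ge0 andbT eq_sym; apply/negP => /eqP h.
  by move: Lp; rewrite /L /Lk h mul0r ltxx.
have LA : 0 < L -> 0 < L' + muf.
  move=> Lp; have h := LnK Lp.
  have : 0 < L' by rewrite /L' /Lk divr_gt0.
  lra.
have A0 : 0 <= L' + muf by lra.
have Ha2 : (2 * (betak b0 tau k'.+1 + mug))^-1 * nsq (K *m x k'.+2 - K *m xh k'.+1)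
           <= L / 2 * nsq (x k'.+2 - xh k'.+1).
  rewrite -mulmxBr.
  have -> : L / 2 = (2 * (betak b0 tau k'.+1 + mug))^-1 * nK ^+ 2.
    by rewrite /L /Lk; field; rewrite gt_eqF.
  rewrite -mulrA; apply: ler_wpM2l; last exact: Hopn.
  by rewrite invr_ge0 mulr_ge0 // ltW.
set x1 := x k'.+2 in Hb Hscf1 Ha2 *.
set x0k := x k'.+1 in Hb Hscf1 Ha2 *.
set y1 := y k'.+2 in Hb He Gk1up Gklb Gk1lb *.
set xhk := xh k'.+1 in Hb Gk1up Ha2 *.
have E1 : dotp (K *m w) y1 - dotp (K *m x1) y1 = dotp (K^T *m y1) (w - x1).
  by rewrite (dotp_mul K w) (dotp_mul K x1) -dotpBl dotpC.
have LLi : L * (L^-1 * dotp (K^T *m y1) (w - x1)) = dotp (K^T *m y1) (w - x1).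
  have [L00|Ln] := eqVneq L 0.
    have nK00 : nK ^+ 2 = 0.
      move: L00; rewrite /L /Lk => /eqP; rewrite mulf_eq0 invr_eq0 => /orP[/eqP //|].
      by rewrite gt_eqF.
    have : dotp (K *m (w - x1)) y1 = 0.
      by apply: nsq_le0; have := Hopn (w - x1); rewrite nK00 mul0r.
    by rewrite dotp_mul dotpC => ->; rewrite !mulr0.
  by rewrite mulrA mulfV ?mul1r.
have Eb : L * dotp (xhk - L^-1 *: (K^T *m y1) - x1) (w - x1) =
   L * dotp (xhk - x1) (w - x1) - (dotp (K *m w) y1 - dotp (K *m x1) y1).
  have -> : xhk - L^-1 *: (K^T *m y1) - x1 = (xhk - x1) - L^-1 *: (K^T *m y1).
    by apply/matrixP => i j; rewrite !mxE; ring.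
  by rewrite (dotpBl (xhk - x1)) dotpZl E1 mulrBr LLi.
rewrite Eb in Hb.
have Ei : L * dotp (xhk - x1) (w - x1) =
   L / 2 * nsq (x1 - xhk) + L / 2 * nsq (w - x1) - L / 2 * nsq (w - xhk).
  have -> : w - xhk = (w - x1) + (x1 - xhk) by rewrite addrA subrK.
  have -> : xhk - x1 = - (x1 - xhk) by rewrite opprB.
  move: (w - x1) (x1 - xhk) => a b; dexp; rewrite (dotpC b a).
  lra.
have tn : tau k'.+1 != 0 by rewrite gt_eqF.
have tpn : tau k' != 0 by rewrite gt_eqF.
have Ej : (L + muf) / 2 * nsq (w - x1) =
   (L + muf) * tau k'.+1 ^+ 2 / 2 * nsq ((tau k'.+1)^-1 *: (x1 - (1 - tau k'.+1) *: x0k) - xx).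
  have -> : w - x1 = - (tau k'.+1 *: ((tau k'.+1)^-1 *: (x1 - (1 - tau k'.+1) *: x0k) - xx)).
    by apply/matrixP => i j; rewrite /w !mxE; field.
  move: (_ - xx) => a; dexp; ring.
have Hq := quad_vec (x0k - xx) ((tau k')^-1 *: (x0k - (1 - tau k') *: x k') - xx)
             (Ht k'.+1) (Ht k') muf0 L0 A0 LA C1 C2.
have Dp : 0 < tau k' ^+ 2 + (L + muf) / (L' + muf) * tau k'.+1.
  have h1 : 0 < tau k' ^+ 2 by rewrite exprn_gt0.
  have h2 : 0 <= (L + muf) / (L' + muf) * tau k'.+1.
    by apply: mulr_ge0; [apply: divr_ge0; lra | exact: ltW].
  lra.
have Dn : tau k' ^+ 2 + (L + muf) / (L' + muf) * tau k'.+1 != 0 by rewrite gt_eqF.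
have Ewxh : w - xhk = - ((tau k'.+1 - tau k' ^+ 2 / (tau k' ^+ 2 + (L + muf) / (L' + muf) * tau k'.+1)) *: (x0k - xx)
    + (tau k' ^+ 2 / (tau k' ^+ 2 + (L + muf) / (L' + muf) * tau k'.+1)) *:
      ((tau k')^-1 *: (x0k - (1 - tau k') *: x k') - xx)).
  rewrite /xhk (Hxh k') /eta_next /m_next -[Lk nK mug b0 tau k'.+1]/L -[Lk nK mug b0 tau k']/L'.
  move: Dn; move: ((L + muf) / (L' + muf)) => m Dn.
  by apply/matrixP => i j; rewrite /w /x0k !mxE; field; rewrite tpn Dn.
have Hl : L / 2 * nsq (w - xhk) - muf / 2 * (tau k'.+1 * (1 - tau k'.+1)) * nsq (xx - x0k)
    <= (1 - tau k'.+1) * ((L' + muf) * tau k' ^+ 2 / 2 *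
         nsq ((tau k')^-1 *: (x0k - (1 - tau k') *: x k') - xx)).
  have En1 : forall d (v : 'cV[R]_d), nsq (- v) = nsq v by move=> d v; dexp; ring.
  have En2 : nsq (xx - x0k) = nsq (x0k - xx) by rewrite -En1 opprB.
  rewrite Ewxh En1 En2; lra.
have EV1 : Vly f g K nK muf mug b0 tau yd x yt k'.+2 xx =
  (fk1 + Gk1 - (fx + dotp (K *m xx) (yt k'.+2) - gtk1) +
   (L + muf) * tau k'.+1 ^+ 2 / 2 *
     nsq ((tau k'.+1)^-1 *: (x1 - (1 - tau k'.+1) *: x0k) - xx))%:E.
  rewrite /Vly /Fbeta /lagr Efk1 EGk1 Efx Egtk1.
  by rewrite !(EFinD, EFinB).
have EV0 : Vly f g K nK muf mug b0 tau yd x yt k'.+1 xx =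
  (fk + Gk - (fx + dotp (K *m xx) (yt k'.+1) - gtk) +
   (L' + muf) * tau k' ^+ 2 / 2 *
     nsq ((tau k')^-1 *: (x0k - (1 - tau k') *: x k') - xx))%:E.
  rewrite /Vly /Fbeta /lagr Efk EGk Efx Egtk.
  by rewrite !(EFinD, EFinB).
rewrite EV1 EV0 -EFinM lee_fin.
have Hk2 : (1 - tau k'.+1) * (betak b0 tau k' / 2 * nsq (y1 - yd))
           - betak b0 tau k'.+1 / 2 * nsq (y1 - yd) <= 0.
  rewrite Bk.
  have t1n : 1 + tau k'.+1 != 0 by rewrite gt_eqF // addr_gt0.
  have -> : (1 - tau k'.+1) * (betak b0 tau k' / 2 * nsq (y1 - yd))
           - betak b0 tau k' / (1 + tau k'.+1) / 2 * nsq (y1 - yd) =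
           - ((tau k'.+1 ^+ 2 * betak b0 tau k' * nsq (y1 - yd)) / (2 * (1 + tau k'.+1))).
    by field.
  rewrite oppr_le0 divr_ge0 //; last by rewrite mulr_ge0 // addr_ge0 // ltW.
  by rewrite !mulr_ge0 ?sqr_ge0 ?nsq_ge0 // ltW.
have Hd : (1 - tau k'.+1) * (dotp (K *m x k'.+1) (y k'.+2) - gy - betak b0 tau k' / 2 * nsq (y k'.+2 - yd))
          <= (1 - tau k'.+1) * Gk.
  by apply: ler_wpM2l; [rewrite subr_ge0 | exact: Gklb].
have Hf : dotp (K *m xx) (yt k'.+2) = (1 - tau k'.+1) * dotp (K *m xx) (yt k'.+1)
            + tau k'.+1 * dotp (K *m xx) y1.
  by rewrite (Hyt k'.+1) dotpDr !dotpZr.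
have Hg : dotp (K *m w) y1 = tau k'.+1 * dotp (K *m xx) y1 + (1 - tau k'.+1) * dotp (K *m x0k) y1.
  by rewrite /w mulmxDr -!scalemxAr dotpDl !dotpZl.
have Hh : dotp (K *m x1 - K *m xhk) y1 = dotp (K *m x1) y1 - dotp (K *m xhk) y1 by rewrite dotpBl.
move: Hb Ei Ej Gk1up Ha2 Hscf1 Hl Hd Hk2 He Hf Hg Hh.
rewrite /x1 /x0k /y1 /xhk /w /L /L'.
clear.
move=> *; lra.
Qed.
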